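(* Let $k>0$, $l\ge0$, $\epsilon_r>0$, and define the mass-spring energy $p:\mathbb{R}^3\to\mathbb{R}$, $p(d)=\frac k2\big(\sqrt{d^Td+\epsilon_r}-l\big)^2$. Then $p\ge0$, $p$ is twice differentiable with locally Lipschitz second derivatives, and $p$ is $L$-curvature bounded for a constant $L$ depending only on $k,l,\epsilon_r$ (in particular independent of any relaxation parameter $L_2$); hence taking the relaxation $\bar p=p$ gives $\bar p=p$ whenever $\bar p\le L_2$.
   Context: A function $\phi$ is $L$-curvature bounded if $\phi(x)+\frac L2\|x\|^2$ is convex and $\nabla\phi$ is $L$-Lipschitz. In applications $d$ is an edge vector depending linearly on the configuration. *)

(* Defs.v *)
From HB Require Import structures.
From mathcomp Require Import all_boot all_order all_algebra.
From mathcomp Require Import all_classical all_reals all_analysis.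
Set Implicit Arguments. Unset Strict Implicit. Unset Printing Implicit Defensive.
Import Order.TTheory GRing.Theory Num.Theory.
Import numFieldNormedType.Exports.
Local Open Scope ring_scope.

Section Defs.
Variable R : realType.

Definition dot3 (x y : 'rV[R]_3) : R := \sum_(i < 3) x 0 i * y 0 i.
Definition enorm3 (x : 'rV[R]_3) : R := Num.sqrt (dot3 x x).

Definition e3 (i : 'I_3) : 'rV[R]_3 := delta_mx 0 i.

Definition grad3 (f : 'rV[R]_3 -> R) (x : 'rV[R]_3) : 'rV[R]_3 :=
  \row_(i < 3) ('D_(e3 i) f x).

Definition hess3 (f : 'rV[R]_3 -> R) (x : 'rV[R]_3) : 'M[R]_3 :=
  \matrix_(i < 3, j < 3) ('D_(e3 j) (fun y => grad3 f y 0 i) x).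

Definition twice_differentiable3 (f : 'rV[R]_3 -> R) : Prop :=
  (forall x, differentiable f x) /\ (forall x, differentiable (grad3 f) x).

Definition hess_locally_lipschitz3 (f : 'rV[R]_3 -> R) : Prop :=
  forall x : 'rV[R]_3, exists2 r : R, 0 < r & exists C : R,
    forall y z : 'rV[R]_3, enorm3 (y - x) < r -> enorm3 (z - x) < r ->
      `|hess3 f y - hess3 f z| <= C * enorm3 (y - z).

Definition convex3 (g : 'rV[R]_3 -> R) : Prop :=
  forall (x y : 'rV[R]_3) (t : R), 0 <= t -> t <= 1 ->
    g (t *: x + (1 - t) *: y) <= t * g x + (1 - t) * g y.

Definition curvature_bounded3 (L : R) (phi : 'rV[R]_3 -> R) : Prop :=
  convex3 (fun x => phi x + L / 2 * (enorm3 x) ^+ 2) /\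
  (forall x y, enorm3 (grad3 phi x - grad3 phi y) <= L * enorm3 (x - y)).

Definition spring_energy (k l epsr : R) (d : 'rV[R]_3) : R :=
  k / 2 * (Num.sqrt (dot3 d d + epsr) - l) ^+ 2.

End Defs.

(* Main.v *)
Require Import Defs.
From HB Require Import structures.
From mathcomp Require Import all_boot all_order all_algebra.
From mathcomp Require Import all_classical all_reals all_analysis.
From mathcomp Require Import ring lra.
Import Order.TTheory GRing.Theory Num.Theory.
Import numFieldNormedType.Exports.
Local Open Scope ring_scope.

Section A.
Context {R : realFieldType}.

Lemma sq3_ge0 (p q s : R) : 0 <= p^+2 + q^+2 + s^+2.
Proof. by rewrite addr_ge0 ?sqr_ge0 // addr_ge0 ?sqr_ge0. Qed.

Lemma A1 {y0 y1 y2 z0 z1 z2 a b e : R} : 0 < a -> 0 < b -> 0 < e ->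
  a^+2 = y0^+2+y1^+2+y2^+2+e -> b^+2 = z0^+2+z1^+2+z2^+2+e ->
  (y0*b - z0*a)^+2 + (y1*b - z1*a)^+2 + (y2*b-z2*a)^+2 <=
  a*b*((y0-z0)^+2+(y1-z1)^+2+(y2-z2)^+2).
Proof.
move=> ha hb he Ha Hb; rewrite -subr_ge0.
have -> : a*b*((y0-z0)^+2+(y1-z1)^+2+(y2-z2)^+2) - ((y0*b - z0*a)^+2 + (y1*b - z1*a)^+2 + (y2*b-z2*a)^+2)
  = (a-b)*(b*(y0^+2+y1^+2+y2^+2) - a*(z0^+2+z1^+2+z2^+2)) by ring.
have -> : y0^+2+y1^+2+y2^+2 = a^+2 - e by rewrite Ha; ring.
have -> : z0^+2+z1^+2+z2^+2 = b^+2 - e by rewrite Hb; ring.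
have -> : (a-b)*(b*(a^+2-e) - a*(b^+2-e)) = (a-b)^+2*(a*b+e) by ring.
apply: mulr_ge0; first exact: sqr_ge0.
by apply: addr_ge0; [apply: mulr_ge0; exact: ltW|exact: ltW].
Qed.

Lemma A2 {y0 y1 y2 z0 z1 z2 a b e : R} : 0 <= a -> 0 <= b -> 0 < e ->
  a^+2 = y0^+2+y1^+2+y2^+2+e -> b^+2 = z0^+2+z1^+2+z2^+2+e ->
  y0*z0+y1*z1+y2*z2+e <= a*b.
Proof.
move=> ha hb he Ha Hb.
have H : (y0*z0+y1*z1+y2*z2+e)^+2 <= (a*b)^+2.
  rewrite exprMn Ha Hb.
  have := sqr_ge0 (y0*z1-y1*z0); have := sqr_ge0 (y0*z2-y2*z0);
  have := sqr_ge0 (y1*z2-y2*z1); have := sqr_ge0 (y0-z0);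
  have := sqr_ge0 (y1-z1); have := sqr_ge0 (y2-z2). nra.
have := mulr_ge0 ha hb. nra.
Qed.

Lemma A3 {y0 y1 y2 z0 z1 z2 a b e D : R} : 0 <= a -> 0 <= b -> 0 < e -> 0 <= D ->
  a^+2 = y0^+2+y1^+2+y2^+2+e -> b^+2 = z0^+2+z1^+2+z2^+2+e ->
  D^+2 = (y0-z0)^+2+(y1-z1)^+2+(y2-z2)^+2 ->
  `|a - b| <= D.
Proof.
move=> ha hb he hD Ha Hb HD.
have := A2 ha hb he Ha Hb => H2.
have H : (a - b)^+2 <= D^+2.
  rewrite HD; have -> : (a-b)^+2 = a^+2 + b^+2 - 2*(a*b) by ring.
  rewrite Ha Hb; nra.
rewrite ler_norml; apply/andP; split; nra.
Qed.

Lemma A4 {y0 y1 y2 z0 z1 z2 a b r D : R} : 0 < a -> 0 < b -> 0 < r -> 0 <= D ->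
  a^+2 = y0^+2+y1^+2+y2^+2+r^+2 -> b^+2 = z0^+2+z1^+2+z2^+2+r^+2 ->
  D^+2 = (y0-z0)^+2+(y1-z1)^+2+(y2-z2)^+2 ->
  ((y0/a - z0/b)^+2 + (y1/a - z1/b)^+2 + (y2/a - z2/b)^+2) * r^+2 <= D^+2.
Proof.
move=> ha hb hr hD Ha Hb HD.
have he : 0 < r^+2 by rewrite exprn_gt0.
have H1 := A1 ha hb he Ha Hb.
have hab : r^+2 <= a * b.
  have : r <= a by nra.
  have : r <= b by nra.
  nra.
have -> : (y0/a - z0/b)^+2 + (y1/a - z1/b)^+2 + (y2/a - z2/b)^+2 =
  ((y0*b - z0*a)^+2 + (y1*b - z1*a)^+2 + (y2*b-z2*a)^+2) / (a*b)^+2.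
  by field; apply/andP; split; rewrite gt_eqF.
have hab0 : 0 < (a*b)^+2 by rewrite exprn_gt0 // mulr_gt0.
rewrite mulrC mulrA ler_pdivrMr // HD.
apply: (le_trans (ler_wpM2l (ltW he) H1)).
set T := (_ + _ + _)%R.
have hT : 0 <= T by rewrite /T; apply: addr_ge0; [apply: addr_ge0|]; exact: sqr_ge0.
have hp : 0 <= a * b * T by rewrite mulr_ge0 // mulr_ge0 // ltW.
have hab2 : 0 <= a * b - r^+2 by rewrite subr_ge0.
have := mulr_ge0 hab2 hp.
rewrite expr2; nra.
Qed.

Lemma A5 {y0 y1 y2 z0 z1 z2 a b e : R} : 0 < a -> 0 < b -> 0 < e ->
  a^+2 = y0^+2+y1^+2+y2^+2+e -> b^+2 = z0^+2+z1^+2+z2^+2+e ->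
  0 <= (y0-z0)*(y0/a - z0/b) + (y1-z1)*(y1/a - z1/b) + (y2-z2)*(y2/a - z2/b).
Proof.
move=> ha hb he Ha Hb.
have H2 := A2 (ltW ha) (ltW hb) he Ha Hb.
have -> : (y0-z0)*(y0/a - z0/b) + (y1-z1)*(y1/a - z1/b) + (y2-z2)*(y2/a - z2/b)
  = (b * (y0^+2+y1^+2+y2^+2) + a * (z0^+2+z1^+2+z2^+2) - (a+b)*(y0*z0+y1*z1+y2*z2)) / (a*b).
  by field; apply/andP; split; rewrite gt_eqF.
apply: divr_ge0; last by rewrite ltW // mulr_gt0.
have -> : y0^+2+y1^+2+y2^+2 = a^+2 - e by rewrite Ha; ring.
have -> : z0^+2+z1^+2+z2^+2 = b^+2 - e by rewrite Hb; ring.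
nra.
Qed.


Lemma A6 {d0 d1 d2 m0 m1 m2 k l r D : R} : 0 <= k -> 0 <= l -> 0 < r -> 0 <= D ->
  D^+2 = d0^+2+d1^+2+d2^+2 -> (m0^+2+m1^+2+m2^+2) * r^+2 <= D^+2 ->
  0 <= d0 * m0 + d1 * m1 + d2 * m2 ->
  (k * d0 - k * l * m0)^+2 + (k * d1 - k * l * m1)^+2 + (k * d2 - k * l * m2)^+2 <=
  ((k + 2 * k * l / r) * D)^+2.
Proof.
move=> hk hl hr hD HD HM Hdm.
set q := l / r.
have hq : 0 <= q by rewrite /q divr_ge0 // ltW.
have lq : l = q * r by rewrite /q divfK // gt_eqF.
have -> : (k * d0 - k * l * m0)^+2 + (k * d1 - k * l * m1)^+2 + (k * d2 - k * l * m2)^+2 =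
  k^+2 * (d0^+2+d1^+2+d2^+2) - 2 * k^+2 * l * (d0 * m0 + d1 * m1 + d2 * m2)
  + k^+2 * q^+2 * ((m0^+2+m1^+2+m2^+2) * r^+2) by rewrite lq; ring.
rewrite -HD.
have h1 : k^+2 * q^+2 * ((m0^+2+m1^+2+m2^+2) * r^+2) <= k^+2 * q^+2 * D^+2.
  by apply: ler_wpM2l => //; rewrite mulr_ge0 // sqr_ge0.
have h2 : 0 <= 2 * k^+2 * l * (d0 * m0 + d1 * m1 + d2 * m2).
  by rewrite mulr_ge0 // mulr_ge0 // mulr_ge0 // sqr_ge0.
have -> : ((k + 2 * k * l / r) * D)^+2 = k^+2 * D^+2 * (1 + 2 * q)^+2 by rewrite /q; ring.
have h3 : 0 <= k^+2 * D^+2 by rewrite mulr_ge0 // sqr_ge0.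
nra.
Qed.

Lemma A7 {x0 x1 x2 y0 y1 y2 t a b c r k l : R} :
  0 <= t -> t <= 1 -> 0 <= a -> 0 <= b -> 0 <= c -> 0 < r -> 0 <= k -> 0 <= l ->
  a^+2 = x0^+2+x1^+2+x2^+2+r^+2 -> b^+2 = y0^+2+y1^+2+y2^+2+r^+2 ->
  c^+2 = (t * x0+(1-t) * y0)^+2+(t * x1+(1-t) * y1)^+2+(t * x2+(1-t) * y2)^+2+r^+2 ->
  k/2 * (c-l)^+2 + (k + 2 * k * l / r)/2 * ((t * x0+(1-t) * y0)^+2+(t * x1+(1-t) * y1)^+2+(t * x2+(1-t) * y2)^+2)
  <= t * (k/2 * (a-l)^+2 + (k + 2 * k * l / r)/2 * (x0^+2+x1^+2+x2^+2))
   + (1-t) * (k/2 * (b-l)^+2 + (k + 2 * k * l / r)/2 * (y0^+2+y1^+2+y2^+2)).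
Proof.
move=> ht0 ht1 ha hb hc hr hk hl Ha Hb Hc.
set q := l / r.
have hq : 0 <= q by rewrite /q divr_ge0 // ltW.
have lq : l = q * r by rewrite /q divfK // gt_eqF.
have ar : r <= a by nra.
have br : r <= b by nra.
set u := t * a + (1 - t) * b.
have ur : r <= u by rewrite /u; nra.
set D2 := (x0-y0)^+2+(x1-y1)^+2+(x2-y2)^+2.
have htt : 0 <= t * (1 - t) by nra.
have key : (u - c) * r <= t * (1 - t) * D2.
  have hD2 : 0 <= D2 by exact: sq3_ge0.
  have [uc|cu] := leP u c.
    have : (u - c) * r <= 0 by rewrite mulr_le0_ge0 // ?subr_le0 // ltW.
    move=> h; apply: (le_trans h); exact: mulr_ge0.
  have E : u^+2 - c^+2 = 2 * (t * (1 - t)) * (a * b - (x0 * y0+x1 * y1+x2 * y2) - r^+2).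
    rewrite /u Hc.
    have -> : (t * a + (1 - t) * b)^+2 = t^+2 * a^+2 + (1-t)^+2 * b^+2 + 2 * (t * (1 - t)) * (a * b) by ring.
    rewrite Ha Hb; ring.
  have E2 : D2 = a^+2 + b^+2 - 2 * r^+2 - 2 * (x0 * y0+x1 * y1+x2 * y2) by rewrite /D2 Ha Hb; ring.
  have h1 : (u - c) * r <= u^+2 - c^+2 by nra.
  rewrite (le_trans h1) // E E2.
  have : 0 <= (a - b)^+2 by exact: sqr_ge0.
  nra.
have key2 : k * l * (u - c) <= k * q * (t * (1 - t) * D2).
  rewrite lq (_ : k * (q * r) * (u - c) = k * q * ((u - c) * r)); last by ring.
  by apply: ler_wpM2l => //; exact: mulr_ge0.
rewrite -subr_ge0.
have ea : (a - l)^+2 = a^+2 - 2 * a * l + l^+2 by ring.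
have eb : (b - l)^+2 = b^+2 - 2 * b * l + l^+2 by ring.
have ec : (c - l)^+2 = c^+2 - 2 * c * l + l^+2 by ring.
rewrite ea eb ec Ha Hb Hc.
apply: (@le_trans _ _ ((k + k * q) * (t * (1 - t) * D2) - k * l * (u - c))); last first.
  rewrite le_eqVlt; apply/orP; left; apply/eqP; rewrite /u /D2 /q; field; by rewrite gt_eqF.
have hD2 : 0 <= D2 by exact: sq3_ge0.
have : 0 <= k * (t * (1 - t) * D2) by rewrite mulr_ge0 // mulr_ge0.
nra.
Qed.


Lemma A8 {f1 f2 g1 g2 B1 B2 : R} : `|f1| <= B1 -> `|g2| <= B2 ->
  `|f1 * g1 - f2 * g2| <= B1 * `|g1 - g2| + B2 * `|f1 - f2|.
Proof.
move=> h1 h2.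
have -> : f1 * g1 - f2 * g2 = f1 * (g1 - g2) + g2 * (f1 - f2) by ring.
apply: (le_trans (ler_normD _ _)); rewrite !normrM.
by apply: lerD; apply: ler_wpM2r.
Qed.

Lemma A9 {a b r D : R} : 0 < r -> r <= a -> r <= b -> `|a - b| <= D ->
  `|a^-1 - b^-1| <= D / r^+2.
Proof.
move=> hr ha hb hD.
have a0 : 0 < a by exact: lt_le_trans ha.
have b0 : 0 < b by exact: lt_le_trans hb.
have -> : a^-1 - b^-1 = (b - a) / (a * b) by field; apply/andP; split; rewrite gt_eqF.
rewrite normrM normfV (gtr0_norm (mulr_gt0 a0 b0)) distrC.
have hD0 : 0 <= D := le_trans (normr_ge0 _) hD.
apply: (le_trans (ler_wpM2r _ hD)); first by rewrite invr_ge0 ltW // mulr_gt0.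
apply: ler_wpM2l => //; rewrite lef_pV2 ?posrE ?exprn_gt0 ?mulr_gt0 //.
by rewrite expr2 ler_pM // ltW.
Qed.

Lemma A10 {yi yj zi zj a b r D : R} : 0 < r -> r <= a -> r <= b -> 0 <= D ->
  `|yi| <= a -> `|zi| <= b -> `|yj| <= a -> `|zj| <= b ->
  `|yi / a - zi / b| <= D / r -> `|yj / a - zj / b| <= D / r -> `|a - b| <= D ->
  `|yi * yj / a^+3 - zi * zj / b^+3| <= 3 * D / r^+2.
Proof.
move=> hr ha hb hD hyi hzi hyj hzj Li Lj Lab.
have a0 : 0 < a by exact: lt_le_trans ha.
have b0 : 0 < b by exact: lt_le_trans hb.
have ea : yi * yj / a^+3 = (yi / a) * ((yj / a) * a^-1) by field; rewrite gt_eqF.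
have eb : zi * zj / b^+3 = (zi / b) * ((zj / b) * b^-1) by field; rewrite gt_eqF.
have wa (y : R) : `|y| <= a -> `|y / a| <= 1.
  by move=> h; rewrite normrM normfV (gtr0_norm a0) ler_pdivrMr // mul1r.
have wb (y : R) : `|y| <= b -> `|y / b| <= 1.
  by move=> h; rewrite normrM normfV (gtr0_norm b0) ler_pdivrMr // mul1r.
have ia : `|a^-1| <= r^-1 by rewrite normfV (gtr0_norm a0) lef_pV2 ?posrE.
have ib : `|b^-1| <= r^-1 by rewrite normfV (gtr0_norm b0) lef_pV2 ?posrE.
have Lab' := A9 hr ha hb Lab.
have G : `|yj / a * a^-1 - zj / b * b^-1| <= 2 * D / r^+2.
  apply: (le_trans (A8 (wa _ hyj) ib)).
  rewrite mul1r.
  have : r^-1 * `|yj / a - zj / b| <= r^-1 * (D / r) by apply: ler_wpM2l Lj; rewrite invr_ge0 ltW.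
  have -> : r^-1 * (D / r) = D / r^+2 by field; rewrite gt_eqF.
  move=> h; apply: (le_trans (lerD Lab' h)).
  by rewrite le_eqVlt; apply/orP; left; apply/eqP; field; rewrite gt_eqF.
have gb : `|zj / b * b^-1| <= r^-1.
  by rewrite normrM -[r^-1]mul1r ler_pM ?normr_ge0 ?wb.
rewrite ea eb; apply: (le_trans (A8 (wa _ hyi) gb)); rewrite mul1r.
have : r^-1 * `|yi / a - zi / b| <= r^-1 * (D / r) by apply: ler_wpM2l Li; rewrite invr_ge0 ltW.
have -> : r^-1 * (D / r) = D / r^+2 by field; rewrite gt_eqF.
move=> h; apply: (le_trans (lerD G h)).
by rewrite le_eqVlt; apply/orP; left; apply/eqP; field; rewrite gt_eqF.
Qed.

End A.

Section S.
Variable R : realType.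

Lemma is_derive_ext {V W : normedModType R} (f g : V -> W) x v df :
  f = g -> is_derive x v f df -> is_derive x v g df.
Proof. by move=> ->. Qed.
Arguments is_derive_ext {V W f g x v df}.

Lemma scR (a b : R) : a *: b = a * b. Proof. by []. Qed.

Lemma is_derive_coord (x v : 'rV[R]_3) (i : 'I_3) :
  is_derive x v (fun y : 'rV[R]_3 => y 0 i) (v 0 i).
Proof.
have @f : {linear 'M[R]_(1, 3) -> R}.
  by exists (fun N : 'M[R]_(_, _) => N 0 i); do 2![eexists]; do ?[constructor];
     rewrite ?mxE// => ? *; rewrite ?mxE//; move=> ?; rewrite !mxE.
have fE : (fun N : 'M[R]_(1, 3) => N 0 i) = f by [].
apply: DeriveDef; first exact/diff_derivable/differentiable_coord.
rewrite deriveE; last exact: differentiable_coord.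
by rewrite fE diff_lin //; exact: coord_continuous.
Qed.

Lemma is_derive_sqrtc {V : normedModType R} {f : V -> R} {x v df} :
  differentiable f x -> 0 < f x -> is_derive x v f df ->
  is_derive x v (fun y => Num.sqrt (f y)) (df / (2 * Num.sqrt (f x))).
Proof.
move=> fd fp [_ dfv].
have sd : differentiable (@Num.sqrt R) (f x).
  by apply/derivable1_diffP; case: (is_derive1_sqrt fp).
have cd : differentiable (Num.sqrt \o f) x by exact: differentiable_comp.
apply: DeriveDef; first exact: diff_derivable.
rewrite (deriveE _ cd) diff_comp // /= diff1E // -(deriveE _ fd) dfv.
by rewrite derive1E derive_sqrt.
Qed.

Lemma is_deriveVc {V : normedModType R} {f : V -> R} {x v df} :
  f x != 0 -> is_derive x v f df ->
  is_derive x v (fun y => (f y)^-1) (- (f x) ^- 2 *: df).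
Proof.
move=> fx0 [dd dv]; apply: DeriveDef; first exact: derivableV.
by rewrite deriveV // dv.
Qed.


Lemma mxnorm_le (M : 'M[R]_3) c : 0 <= c -> (forall i j, `|M i j| <= c) -> `|M| <= c.
Proof.
move=> c0 H.
have -> : `|M| = mx_norm M by [].
rewrite mx_normrE; apply: bigmax_le => // -[i j] _; exact: H.
Qed.

Section P.
Variables k l e : R.
Hypothesis k0 : 0 < k.
Hypothesis l0 : 0 <= l.
Hypothesis e0 : 0 < e.

Definition qf (y : 'rV[R]_3) := y 0 0 * y 0 0 + y 0 1 * y 0 1 + y 0 2 * y 0 2 + e.
Definition Sf y := Num.sqrt (qf y).
Definition Gf y := k * (1 - l / Sf y).

Lemma qf_gt0 y : 0 < qf y.
Proof. rewrite /qf; have := e0; have := sqr_ge0 (y 0 0); have := sqr_ge0 (y 0 1); have := sqr_ge0 (y 0 2); rewrite !expr2; lra. Qed.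

Lemma Sf_gt0 y : 0 < Sf y.
Proof. by rewrite sqrtr_gt0 qf_gt0. Qed.

Lemma Sf_neq0 y : Sf y != 0.
Proof. by rewrite gt_eqF // Sf_gt0. Qed.

Lemma Sf_sq y : Sf y ^+ 2 = qf y.
Proof. rewrite /Sf sqr_sqrtr //; exact: ltW (qf_gt0 y). Qed.

Lemma dot3E (y z : 'rV[R]_3) : dot3 y z = y 0 0 * z 0 0 + y 0 1 * z 0 1 + y 0 2 * z 0 2.
Proof.
rewrite /dot3 !big_ord_recl big_ord0 addr0 !addrA.
by congr (_ * _ + _ * _ + _ * _); congr (_ _ _); apply/val_inj.
Qed.

Lemma pE : spring_energy k l e = fun y => k / 2 * (Sf y - l) ^+ 2.
Proof. by apply: funext => y; rewrite /spring_energy dot3E. Qed.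

Lemma is_derive_qf x v : is_derive x v qf
  (2 * (x 0 0 * v 0 0 + x 0 1 * v 0 1 + x 0 2 * v 0 2)).
Proof.
have c := is_derive_coord x v.
have H := is_deriveD (is_deriveD (is_deriveD (is_deriveM (c 0) (c 0))
  (is_deriveM (c 1) (c 1))) (is_deriveM (c 2) (c 2))) (is_derive_cst e x v).
apply: (is_derive_ext _ (is_derive_eq H _)).
  by apply: funext => y.
by rewrite /= !scR; ring.
Qed.

Lemma differentiable_qf x : differentiable qf x.
Proof.
have -> : qf = ((fun y : 'rV[R]_3 => y 0 0) * (fun y => y 0 0) +
  (fun y : 'rV[R]_3 => y 0 1) * (fun y => y 0 1) +
  (fun y : 'rV[R]_3 => y 0 2) * (fun y => y 0 2) + cst e) by apply: funext.
repeat apply: differentiableD; try apply: differentiableM;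
  try exact: (@differentiable_coord R 1 3).
all: exact: differentiable_cst.
Qed.

Lemma differentiable_sqrtc {V : normedModType R} {f : V -> R} {x} :
  differentiable f x -> 0 < f x -> differentiable (fun y => Num.sqrt (f y)) x.
Proof.
move=> fd fp; have sd : differentiable (@Num.sqrt R) (f x).
  by apply/derivable1_diffP; case: (is_derive1_sqrt fp).
exact: (differentiable_comp fd sd).
Qed.

Lemma differentiable_Sf x : differentiable Sf x.
Proof. exact: (differentiable_sqrtc (differentiable_qf x) (qf_gt0 x)). Qed.

Definition dot (v x : 'rV[R]_3) : R := x 0 0 * v 0 0 + x 0 1 * v 0 1 + x 0 2 * v 0 2.

Lemma is_derive_Sf x v : is_derive x v Sf (dot v x / Sf x).
Proof.
apply: is_derive_eq.
  exact: (is_derive_sqrtc (differentiable_qf x) (qf_gt0 x) (is_derive_qf x v)).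
rewrite -/(Sf x) /dot; have := Sf_gt0 x; move=> H; field; lra.
Qed.

Lemma is_derive_p x v : is_derive x v (spring_energy k l e)
  (k * (Sf x - l) * (dot v x / Sf x)).
Proof.
rewrite pE.
have H := is_deriveZ (k / 2) (is_deriveX 2 (is_deriveB (is_derive_Sf x v) (is_derive_cst l x v))).
apply: (is_derive_ext _ (is_derive_eq H _)).
  by apply: funext => y.
have -> : (Sf - cst l) x = Sf x - l by [].
rewrite /= !scR expr1 subr0; field; exact: Sf_neq0.
Qed.

Lemma ordP3 (i : 'I_3) : i = 0 \/ i = 1 \/ i = 2.
Proof.
case: i => [[|[|[|n]]] Hi]; [left|right;left|right;right|done]; exact/val_inj.
Qed.

Lemma dot_e3 (i : 'I_3) x : dot (e3 R i) x = x 0 i.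
Proof.
rewrite /dot /e3 !mxE.
by case: (ordP3 i) => [->|[->|->]] /=; rewrite ?mulr1 ?mulr0 ?addr0 ?add0r.
Qed.

Lemma grad_p x : grad3 (spring_energy k l e) x = Gf x *: x.
Proof.
apply/rowP => i; rewrite !mxE.
have [_ ->] := is_derive_p x (e3 R i).
rewrite dot_e3 /Gf; have := Sf_gt0 x => H; field; lra.
Qed.

Lemma GfE : Gf = cst k * (cst 1 - cst l * (fun y => (Sf y)^-1)).
Proof. by apply: funext => y. Qed.

Lemma is_derive_Gf x v : is_derive x v Gf (k * l * (dot v x / Sf x) / Sf x ^+ 2).
Proof.
rewrite GfE.
have H := is_deriveM (is_derive_cst (k:R) x v) (is_deriveB (is_derive_cst (1:R) x v)
   (is_deriveM (is_derive_cst (l:R) x v) (is_deriveVc (Sf_neq0 x) (is_derive_Sf x v)))).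
apply: (is_derive_eq H).
rewrite /= !scR /cst; have := Sf_neq0 x => H0; field; exact: H0.
Qed.

Lemma differentiable_Gf x : differentiable Gf x.
Proof.
rewrite GfE; apply: differentiableM; first exact: differentiable_cst.
apply: differentiableB; first exact: differentiable_cst.
apply: differentiableM; first exact: differentiable_cst.
apply: differentiableV; [exact: differentiable_Sf | exact: Sf_neq0].
Qed.

Lemma e3E (i j : 'I_3) : e3 R j 0 i = (i == j)%:R.
Proof. by rewrite /e3 mxE eqxx. Qed.

Lemma hess_p x i j : hess3 (spring_energy k l e) x i j =
  Gf x * (i == j)%:R + k * l * (x 0 i * x 0 j) / Sf x ^+ 3.
Proof.
rewrite mxE.
have -> : (fun y => grad3 (spring_energy k l e) y 0 i) = Gf * (fun y => y 0 i).
  by apply: funext => y; rewrite grad_p mxE.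
have [_ ->] := is_deriveM (is_derive_Gf x (e3 R j)) (is_derive_coord x (e3 R j) i).
rewrite !scR dot_e3 e3E; have := Sf_neq0 x => H0; field; exact: H0.
Qed.

Definition gA (i : 'I_3) : 'rV[R]_3 -> 'rV[R]_3 := fun y => (Gf y * y 0 i) *: e3 R i.

Lemma gradE : grad3 (spring_energy k l e) = gA 0 + gA 1 + gA 2.
Proof.
apply: funext => y; rewrite grad_p; apply/rowP => i; rewrite !mxE /=.

by case: (ordP3 i) => [->|[->|->]] /=; rewrite ?mulr1 ?mulr0 ?addr0 ?add0r.
Qed.

Lemma differentiable_grad x : differentiable (grad3 (spring_energy k l e)) x.
Proof.
rewrite gradE; repeat apply: differentiableD; apply: differentiableZl;
apply: (differentiableM (f := Gf) (g := fun z : 'rV[R]_3 => z 0 _));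
  first exact: differentiable_Gf.
all: first [exact: differentiable_Gf | exact: differentiable_coord | apply: (@differentiable_coord R 1 3 x 0)].
Qed.

Lemma differentiable_p x : differentiable (spring_energy k l e) x.
Proof.
rewrite pE.
have -> : (fun y => k / 2 * (Sf y - l) ^+ 2) = cst (k/2) * ((Sf - cst l) * (Sf - cst l)).
  by apply: funext => y; rewrite /= expr2.
apply: differentiableM; first exact: differentiable_cst.
by apply: differentiableM; apply: differentiableB; 
  [exact: differentiable_Sf|exact: differentiable_cst|exact: differentiable_Sf|exact: differentiable_cst].
Qed.

Definition rr := Num.sqrt e.
Lemma rr_gt0 : 0 < rr. Proof. by rewrite sqrtr_gt0. Qed.
Lemma rr_sq : rr ^+ 2 = e. Proof. by rewrite sqr_sqrtr // ltW. Qed.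

Lemma SfE2 y : Sf y ^+ 2 = y 0 0 ^+ 2 + y 0 1 ^+ 2 + y 0 2 ^+ 2 + rr ^+ 2.
Proof. by rewrite Sf_sq /qf rr_sq !expr2. Qed.

Lemma enorm_sq (u : 'rV[R]_3) : enorm3 u ^+ 2 = u 0 0 ^+ 2 + u 0 1 ^+ 2 + u 0 2 ^+ 2.
Proof. by rewrite /enorm3 dot3E sqr_sqrtr -?expr2 // sq3_ge0. Qed.

Lemma enormE (u : 'rV[R]_3) : enorm3 u = Num.sqrt (u 0 0 ^+ 2 + u 0 1 ^+ 2 + u 0 2 ^+ 2).
Proof. by rewrite /enorm3 dot3E !expr2. Qed.

Lemma enorm_ge0 (u : 'rV[R]_3) : 0 <= enorm3 u.
Proof. exact: sqrtr_ge0. Qed.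

Lemma Sf_ge_r y : rr <= Sf y.
Proof.
have h := SfE2 y; have h1 := ltW (Sf_gt0 y); have h2 := ltW rr_gt0.
have h3 := sq3_ge0 (y 0 0) (y 0 1) (y 0 2).
nra.
Qed.

Lemma coord_le (y : 'rV[R]_3) (i : 'I_3) : `|y 0 i| <= Sf y.
Proof.
have h := SfE2 y; have h1 := ltW (Sf_gt0 y); have h2 := rr_gt0.
rewrite ler_norml; apply/andP.
have := sqr_ge0 (y 0 0); have := sqr_ge0 (y 0 1); have := sqr_ge0 (y 0 2).
by case: (ordP3 i) => [->|[->|->]]; split; nra.
Qed.

Lemma distE (y z : 'rV[R]_3) : enorm3 (y - z) ^+ 2 =
  (y 0 0 - z 0 0) ^+ 2 + (y 0 1 - z 0 1) ^+ 2 + (y 0 2 - z 0 2) ^+ 2.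
Proof. by rewrite enorm_sq !mxE. Qed.

Lemma dist_Sf (y z : 'rV[R]_3) : `|Sf y - Sf z| <= enorm3 (y - z).
Proof.
exact: (A3 (ltW (Sf_gt0 y)) (ltW (Sf_gt0 z)) (exprn_gt0 2 rr_gt0) (enorm_ge0 _)
  (SfE2 y) (SfE2 z) (distE y z)).
Qed.

Lemma lip_w (y z : 'rV[R]_3) (i : 'I_3) : `|y 0 i / Sf y - z 0 i / Sf z| <= enorm3 (y - z) / rr.
Proof.
have H := A4 (Sf_gt0 y) (Sf_gt0 z) rr_gt0 (enorm_ge0 _) (SfE2 y) (SfE2 z) (distE y z).
rewrite ler_pdivlMr ?rr_gt0 //.
set D := enorm3 (y - z) in H *.
have hD : 0 <= D by exact: enorm_ge0.
have hr := rr_gt0.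
set m := y 0 i / Sf y - z 0 i / Sf z.
have Hm : m ^+ 2 * rr ^+ 2 <= D ^+ 2.
  apply: le_trans H; apply: ler_wpM2r; first exact: sqr_ge0.
  rewrite /m; have := sqr_ge0 (y 0 0 / Sf y - z 0 0 / Sf z);
  have := sqr_ge0 (y 0 1 / Sf y - z 0 1 / Sf z);
  have := sqr_ge0 (y 0 2 / Sf y - z 0 2 / Sf z).
  by case: (ordP3 i) => [->|[->|->]] /=; lra.
have hm : `|m| ^+ 2 = m ^+ 2 by rewrite real_normK // num_real.
have := normr_ge0 m.
nra.
Qed.

Definition LL := k + 2 * k * l / rr.

Lemma LL_ge0 : 0 <= LL.
Proof.
apply: addr_ge0; first exact: ltW.
apply: divr_ge0; last exact: ltW rr_gt0.
by rewrite mulr_ge0 // mulr_ge0 // ltW.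
Qed.

Lemma grad_lip (x y : 'rV[R]_3) :
  enorm3 (grad3 (spring_energy k l e) x - grad3 (spring_energy k l e) y) <=
  LL * enorm3 (x - y).
Proof.
rewrite !grad_p enormE.
have hLD : 0 <= LL * enorm3 (x - y) by rewrite mulr_ge0 ?LL_ge0 ?enorm_ge0.
rewrite -(ger0_norm hLD) -sqrtr_sqr ler_sqrt ?sqr_ge0 // !mxE.
have E i : Gf x * x 0 i - Gf y * y 0 i =
  k * (x 0 i - y 0 i) - k * l * (x 0 i / Sf x - y 0 i / Sf y).
  by rewrite /Gf; field; apply/andP; split; exact: Sf_neq0.
rewrite !E /LL.
apply: (A6 (ltW k0) l0 rr_gt0 (enorm_ge0 _) (distE x y)).
  exact: (A4 (Sf_gt0 x) (Sf_gt0 y) rr_gt0 (enorm_ge0 _) (SfE2 x) (SfE2 y) (distE x y)).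
exact: (A5 (Sf_gt0 x) (Sf_gt0 y) (exprn_gt0 2 rr_gt0) (SfE2 x) (SfE2 y)).
Qed.

Lemma convex_p :
  convex3 (fun x => spring_energy k l e x + LL / 2 * enorm3 x ^+ 2).
Proof.
move=> x y t ht0 ht1 /=.
rewrite pE /= !enorm_sq.
set z := t *: x + (1 - t) *: y.
have zi i : z 0 i = t * x 0 i + (1 - t) * y 0 i by rewrite !mxE.
have Hc := SfE2 z; rewrite !zi in Hc *.
rewrite /LL.
exact: (A7 ht0 ht1 (ltW (Sf_gt0 x)) (ltW (Sf_gt0 y)) (ltW (Sf_gt0 z)) rr_gt0 (ltW k0) l0
  (SfE2 x) (SfE2 y) Hc).
Qed.

Lemma hess_lip (y z : 'rV[R]_3) :
  `|hess3 (spring_energy k l e) y - hess3 (spring_energy k l e) z| <=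
  4 * k * l / e * enorm3 (y - z).
Proof.
have hD := enorm_ge0 (y - z).
have hkl : 0 <= k * l by rewrite mulr_ge0 // ltW.
have hc : 0 <= 4 * k * l / e * enorm3 (y - z).
  apply: mulr_ge0 => //; apply: divr_ge0; last exact: ltW.
  by rewrite mulr_ge0 // mulr_ge0 // ltW.
apply: (@mxnorm_le (hess3 (spring_energy k l e) y - hess3 (spring_energy k l e) z) _ hc) => i j.
have Hs (A B : 'M[R]_3) (i0 j0 : 'I_3) : (A - B) i0 j0 = A i0 j0 - B i0 j0 by rewrite !mxE.
rewrite Hs !hess_p.
set a := Sf y; set b := Sf z; set D := enorm3 (y - z).
have a0 := Sf_neq0 y; have b0 := Sf_neq0 z.
have -> : Gf y * (i == j)%:R + k * l * (y 0 i * y 0 j) / a ^+ 3 -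
  (Gf z * (i == j)%:R + k * l * (z 0 i * z 0 j) / b ^+ 3) =
  (k * l) * ((i == j)%:R * (b^-1 - a^-1)) +
  (k * l) * (y 0 i * y 0 j / a ^+ 3 - z 0 i * z 0 j / b ^+ 3).
  by rewrite /Gf -/a -/b; field; apply/andP; split.
apply: (le_trans (ler_normD _ _)); rewrite !normrM (ger0_norm (ltW k0)) (ger0_norm l0).
have h1 : `|(i == j)%:R| * `|b^-1 - a^-1| <= D / rr ^+ 2.
  rewrite distrC.
  have h := A9 rr_gt0 (Sf_ge_r y) (Sf_ge_r z) (dist_Sf y z).
  apply: le_trans h; rewrite -[X in _ <= X]mul1r; apply: ler_wpM2r => //.
  by case: (i == j); rewrite ?normr1 ?normr0.
have h2 := A10 rr_gt0 (Sf_ge_r y) (Sf_ge_r z) hD (coord_le y i) (coord_le z i)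
  (coord_le y j) (coord_le z j) (lip_w y z i) (lip_w y z j) (dist_Sf y z).
apply: (le_trans (lerD (ler_wpM2l hkl h1) (ler_wpM2l hkl h2))).
rewrite rr_sq le_eqVlt; apply/orP; left; apply/eqP. rewrite -/D; field; by rewrite gt_eqF.
Qed.

End P.
End S.

Theorem corollary5 (R : realType) (k l epsr : R) :
  0 < k -> 0 <= l -> 0 < epsr ->
  (forall d, 0 <= spring_energy k l epsr d) /\
  twice_differentiable3 (spring_energy k l epsr) /\
  hess_locally_lipschitz3 (spring_energy k l epsr) /\
  (exists L : R, curvature_bounded3 L (spring_energy k l epsr)) /\
  (let pbar := spring_energy k l epsr in
   forall L2 : R, forall d, pbar d <= L2 -> pbar d = spring_energy k l epsr d).
Proof.
move=> k0 l0 e0; split.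
  move=> d; rewrite /spring_energy; apply: mulr_ge0; last exact: sqr_ge0.
  by apply: divr_ge0 => //; exact: ltW.
split.
  by split => x; [apply: differentiable_p | apply: differentiable_grad].
split.
  move=> x; exists 1 => //; exists (4 * k * l / epsr) => y z _ _.
  exact: hess_lip.
split; last by [].
exists (@LL R k l epsr); split; [exact: convex_p | exact: grad_lip].
Qed.
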